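(* Let $a>0$, $b>0$, $q\in(0,1)$, and let $\alpha,\beta,t$ be real numbers with $\alpha+\beta t>1$. Then \[ a\gamma - b\ln(1-q) + a\psi(\alpha+\beta t) - b\psi_q(\alpha+\beta t) > 0 . \]
   Context: $\gamma$ denotes the Euler–Mascheroni constant and $\psi(t)=\Gamma'(t)/\Gamma(t)$ is the digamma function for $t>0$, where $\Gamma$ is Euler's Gamma function. For $q\in(0,1)$ and $t>0$, the $q$-Gamma function is $\Gamma_q(t)=(1-q)^{1-t}\prod_{n=1}^{\infty}\frac{1-q^n}{1-q^{t+n}}$, and $\psi_q(t)=\frac{d}{dt}\ln\Gamma_q(t)=\Gamma_q'(t)/\Gamma_q(t)$. *)

(* Defs.v *)
From Stdlib Require Import Reals.
From Coquelicot Require Import Coquelicot.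
Open Scope R_scope.

Definition euler_gamma : R :=
  real (Lim_seq (fun n => sum_f_R0 (fun k => / INR (S k)) n - ln (INR (S n)))).

Definition Gamma (t : R) : R :=
  RInt_gen (fun x => Rpower x (t - 1) * exp (- x)) (at_right 0) (Rbar_locally p_infty).

Definition digamma (t : R) : R := Derive (fun s => ln (Gamma s)) t.

Fixpoint qGamma_partial (q t : R) (N : nat) : R :=
  match N with
  | O => 1
  | S M => qGamma_partial q t M *
           ((1 - q ^ (S M)) / (1 - Rpower q (t + INR (S M))))
  end.

Definition qGamma (q t : R) : R :=
  Rpower (1 - q) (1 - t) * real (Lim_seq (qGamma_partial q t)).

Definition qdigamma (q t : R) : R := Derive (fun s => ln (qGamma q s)) t.

(* Main.v *)
Require Import Defs.
From Stdlib Require Import Reals Lra Lia.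
From Coquelicot Require Import Coquelicot.
Open Scope R_scope.

Lemma ln_le_sub1 y : 0 < y -> ln y <= y - 1.
Proof. intros Hy. pose proof (exp_ineq1_le (ln y)). rewrite exp_ln in H; lra. Qed.

Lemma exp_neg_le w : 0 <= w -> exp (- w) <= / (1 + w).
Proof.
  intros Hw. pose proof (exp_ineq1_le w).
  rewrite exp_Ropp. apply Rinv_le_contravar; lra.
Qed.

Lemma exp_convex l p q : 0 <= l <= 1 ->
  exp (l * p + (1 - l) * q) <= l * exp p + (1 - l) * exp q.
Proof.
  intros Hl. set (m := l * p + (1 - l) * q).
  assert (E1 : exp p = exp m * exp (p - m)) by (rewrite <- exp_plus; f_equal; ring).
  assert (E2 : exp q = exp m * exp (q - m)) by (rewrite <- exp_plus; f_equal; ring).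
  pose proof (exp_ineq1_le (p - m)). pose proof (exp_ineq1_le (q - m)).
  pose proof (exp_pos m).
  rewrite E1, E2.
  assert (l * (exp m * exp (p - m)) + (1 - l) * (exp m * exp (q - m)) >=
          l * (exp m * (1 + (p - m))) + (1 - l) * (exp m * (1 + (q - m)))).
  { apply Rle_ge, Rplus_le_compat; apply Rmult_le_compat_l; try lra;
    apply Rmult_le_compat_l; lra. }
  assert (l * (exp m * (1 + (p - m))) + (1 - l) * (exp m * (1 + (q - m))) = exp m)
    by (unfold m; ring).
  lra.
Qed.

Lemma real_Lim_bounds (u : nat -> R) l M :
  (forall n, l <= u n <= M) -> l <= real (Lim_seq u) <= M.
Proof.
  intros H.
  assert (H1 : Rbar_le (Lim_seq (fun _ => l)) (Lim_seq u))
    by (apply Lim_seq_le_loc; exists O; intros; apply H).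
  assert (H2 : Rbar_le (Lim_seq u) (Lim_seq (fun _ => M)))
    by (apply Lim_seq_le_loc; exists O; intros; apply H).
  rewrite Lim_seq_const in H1, H2.
  destruct (Lim_seq u); simpl in *; try contradiction; try lra.
Qed.

Lemma real_Lim_upper_strict (u : nat -> R) c d :
  0 < c -> d < c -> (forall n, u n <= d) -> real (Lim_seq u) < c.
Proof.
  intros Hc Hd H.
  assert (H2 : Rbar_le (Lim_seq u) (Lim_seq (fun _ => d)))
    by (apply Lim_seq_le_loc; exists O; intros; apply H).
  rewrite Lim_seq_const in H2.
  destruct (Lim_seq u); simpl in *; try contradiction; lra.
Qed.

Lemma lim_0_bound (u : nat -> R) C :
  (forall n, 0 <= u n <= C / (INR n + 1)) -> is_lim_seq u 0.
Proof.
  intros H. apply is_lim_seq_spec. intros eps.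
  assert (HC : 0 <= C).
  { destruct (H O) as [H0 H1]. simpl in H1. replace (C / (0+1)) with C in H1 by field. lra. }
  pose proof (is_lim_seq_INR) as HI. apply is_lim_seq_spec in HI.
  destruct (HI (C / eps)) as [N HN]. exists N. intros n Hn.
  specialize (HN n Hn). destruct (H n) as [H0 H1].
  pose proof (pos_INR n). pose proof (cond_pos eps).
  rewrite Rminus_0_r, Rabs_pos_eq by lra.
  apply Rle_lt_trans with (1 := H1).
  unfold Rdiv. apply Rmult_lt_reg_r with (INR n + 1). lra.
  rewrite Rmult_assoc, Rinv_l, Rmult_1_r by lra.
  assert (C = (C / eps) * eps) by (field; lra).
  assert ((C / eps) * eps < INR n * eps) by (apply Rmult_lt_compat_r; lra).
  nra.
Qed.

Definition g (s x : R) := Rpower x (s - 1) * exp (- x).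

Lemma g_exp s x : 0 < x -> g s x = exp ((s - 1) * ln x - x).
Proof. intros. unfold g, Rpower. rewrite <- exp_plus. f_equal; ring. Qed.

Lemma g_pos s x : 0 < g s x.
Proof. unfold g, Rpower. apply Rmult_lt_0_compat; apply exp_pos. Qed.

Lemma g_cont s x : 0 < x -> continuous (g s) x.
Proof.
  intros Hx. apply (ex_derive_continuous (K := R_AbsRing) (V := R_NormedModule) (g s) x). unfold g, Rpower.
  auto_derive. lra.
Qed.

Lemma ex_g s a b : 0 < a -> 0 < b -> ex_RInt (g s) a b.
Proof.
  intros Ha Hb. apply (ex_RInt_continuous (V := R_CompleteNormedModule)). intros z Hz. apply g_cont.
  assert (0 < Rmin a b) by (apply Rmin_glb_lt; auto). lra.
Qed.

Lemma g_mono s a b c d : 0 < a -> a <= c -> c <= d -> d <= b ->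
  RInt (g s) c d <= RInt (g s) a b.
Proof.
  intros Ha Hac Hcd Hdb.
  rewrite <- (RInt_Chasles (g s) a c b) by (apply ex_g; lra).
  rewrite <- (RInt_Chasles (g s) c d b) by (apply ex_g; lra).
  assert (0 <= RInt (g s) a c).
  { apply RInt_ge_0; auto. apply ex_g; lra. intros; apply Rlt_le, g_pos. }
  assert (0 <= RInt (g s) d b).
  { apply RInt_ge_0; auto. apply ex_g; lra. intros; apply Rlt_le, g_pos. }
  change plus with Rplus. lra.
Qed.

Definition Kc (s : R) := exp ((Rabs (s - 1) + 1) * ln (2 * (Rabs (s - 1) + 1)) - (Rabs (s - 1) + 1)).

Lemma exp_le_mono a b : a <= b -> exp a <= exp b.
Proof. intros H. destruct (Rle_lt_or_eq_dec _ _ H) as [H1|H1].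
  apply Rlt_le, exp_increasing; auto. subst; lra. Qed.

Lemma g_tail s x : 1 <= x -> g s x <= Kc s * exp (- x / 2).
Proof.
  intros Hx. rewrite g_exp by lra. unfold Kc. rewrite <- exp_plus.
  apply exp_le_mono.
  set (p := Rabs (s - 1) + 1).
  assert (Hp : 1 <= p) by (unfold p; pose proof (Rabs_pos (s-1)); lra).
  assert (Hsp : s - 1 <= p) by (unfold p; pose proof (Rle_abs (s-1)); lra).
  assert (Hl : 0 <= ln x) by (rewrite <- ln_1; apply ln_le; lra).
  assert (H1 : (s - 1) * ln x <= p * ln x) by (apply Rmult_le_compat_r; lra).
  assert (H2 : ln (x / (2 * p)) <= x / (2 * p) - 1)
    by (apply ln_le_sub1; apply Rdiv_lt_0_compat; lra).
  rewrite ln_div in H2 by lra.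
  assert (H3 : p * (ln x - ln (2 * p)) <= p * (x / (2 * p) - 1))
    by (apply Rmult_le_compat_l; lra).
  assert (p * (x / (2 * p) - 1) = x / 2 - p) by (field; lra).
  lra.
Qed.

Lemma exp_pow_div s x : 0 < x -> exp ((s - 1) * ln x) = exp (s * ln x) / x.
Proof.
  intros Hx. replace ((s - 1) * ln x) with (s * ln x + - ln x) by ring.
  rewrite exp_plus, exp_Ropp, exp_ln by lra. reflexivity.
Qed.

Lemma RInt_pow_0_1 s a : 0 < s -> 0 < a <= 1 ->
  RInt (fun x => Rpower x (s - 1)) a 1 <= / s.
Proof.
  intros Hs Ha.
  assert (H : is_RInt (fun x => Rpower x (s - 1)) a 1
                (minus ((fun x => exp (s * ln x) / s) 1) ((fun x => exp (s * ln x) / s) a))).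
  { apply (is_RInt_derive (V := R_CompleteNormedModule) (fun x => exp (s * ln x) / s)).
    - intros x Hx. rewrite Rmin_left, Rmax_right in Hx by lra.
      unfold Rpower. auto_derive. lra.
      rewrite exp_pow_div by lra. field. lra.
    - intros x Hx. rewrite Rmin_left, Rmax_right in Hx by lra.
      apply (ex_derive_continuous (K := R_AbsRing) (V := R_NormedModule)).
      unfold Rpower. auto_derive. lra. }
  apply (is_RInt_unique (V := R_CompleteNormedModule)) in H. rewrite H.
  unfold minus, plus, opp; simpl. rewrite ln_1, Rmult_0_r, exp_0.
  pose proof (exp_pos (s * ln a)).
  assert (exp (s * ln a) / s > 0) by (apply Rdiv_lt_0_compat; lra).
  unfold Rdiv in *. lra.
Qed.

Lemma RInt_exp_tail K b : 0 <= K -> 1 <= b ->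
  RInt (fun x => K * exp (- x / 2)) 1 b <= 2 * K.
Proof.
  intros HK Hb.
  assert (H : is_RInt (fun x => K * exp (- x / 2)) 1 b
                (minus ((fun x => -2 * K * exp (- x / 2)) b) ((fun x => -2 * K * exp (- x / 2)) 1))).
  { apply (is_RInt_derive (V := R_CompleteNormedModule) (fun x => -2 * K * exp (- x / 2))).
    - intros x Hx. auto_derive. auto. unfold Rdiv. replace (- x * / 2) with (- x * / 2) by reflexivity. set (E := exp (- x * / 2)). simpl. lra.
    - intros x Hx.
      apply (ex_derive_continuous (K := R_AbsRing) (V := R_NormedModule)).
      auto_derive. auto. }
  apply (is_RInt_unique (V := R_CompleteNormedModule)) in H. rewrite H.
  unfold minus, plus, opp; simpl.
  pose proof (exp_pos (- b / 2)).
  assert (exp (- (1) / 2) <= 1).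
  { apply Rle_trans with (exp 0); [apply exp_le_mono; lra | rewrite exp_0; lra]. }
  nra.
Qed.

Lemma g_bound s a b : 0 < s -> 0 < a <= b -> RInt (g s) a b <= / s + 2 * Kc s.
Proof.
  intros Hs [Ha Hab].
  set (a' := Rmin a 1). set (b' := Rmax b 1).
  assert (Ha' : 0 < a' <= 1) by (unfold a'; split; [apply Rmin_glb_lt; lra | apply Rmin_r]).
  assert (Hb' : 1 <= b') by (unfold b'; apply Rmax_r).
  assert (Haa : a' <= a) by apply Rmin_l.
  assert (Hbb : b <= b') by apply Rmax_l.
  apply Rle_trans with (RInt (g s) a' b'). apply g_mono; lra.
  rewrite <- (RInt_Chasles (g s) a' 1 b') by (apply ex_g; lra).
  change plus with Rplus.
  assert (HK : 0 <= Kc s) by (unfold Kc; apply Rlt_le, exp_pos).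
  apply Rplus_le_compat.
  - apply Rle_trans with (RInt (fun x => Rpower x (s - 1)) a' 1).
    + apply RInt_le. lra. apply ex_g; lra.
      apply (ex_RInt_continuous (V := R_CompleteNormedModule)).
      intros z Hz. rewrite Rmin_left, Rmax_right in Hz by lra.
      apply (ex_derive_continuous (K := R_AbsRing) (V := R_NormedModule)).
      unfold Rpower. auto_derive. lra.
      intros x Hx. unfold g. pose proof (exp_pos (- x)).
      assert (exp (- x) <= 1) by (rewrite <- exp_0; apply exp_le_mono; lra).
      assert (0 < Rpower x (s - 1)) by apply exp_pos. nra.
    + apply RInt_pow_0_1; lra.
  - apply Rle_trans with (RInt (fun x => Kc s * exp (- x / 2)) 1 b').
    + apply RInt_le. lra. apply ex_g; lra.
      apply (ex_RInt_continuous (V := R_CompleteNormedModule)).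
      intros z Hz.
      apply (ex_derive_continuous (K := R_AbsRing) (V := R_NormedModule)).
      auto_derive. auto.
      intros x Hx. apply g_tail. lra.
    + apply RInt_exp_tail; lra.
Qed.

Definition an (n : nat) := exp (- (INR n + 1)).
Definition bn (n : nat) := INR n + 1.
Definition I (s : R) (n : nat) := RInt (g s) (an n) (bn n).

Lemma an_pos n : 0 < an n. Proof. apply exp_pos. Qed.
Lemma an_le_1 n : an n <= 1.
Proof. unfold an. pose proof (pos_INR n). apply Rle_trans with (exp 0).
  apply exp_le_mono; lra. rewrite exp_0; lra. Qed.
Lemma bn_ge_1 n : 1 <= bn n. Proof. unfold bn. pose proof (pos_INR n). lra. Qed.
Lemma an_decr n : an (S n) <= an n.
Proof. unfold an. apply exp_le_mono. rewrite S_INR. lra. Qed.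
Lemma bn_incr n : bn n <= bn (S n).
Proof. unfold bn. rewrite S_INR. lra. Qed.

Lemma I_incr s n : I s n <= I s (S n).
Proof.
  unfold I. apply g_mono. apply an_pos. apply an_decr.
  pose proof (an_le_1 n); pose proof (bn_ge_1 n); lra. apply bn_incr.
Qed.

Lemma I_bound s n : 0 < s -> I s n <= / s + 2 * Kc s.
Proof.
  intros Hs. unfold I. apply g_bound; auto. split. apply an_pos.
  pose proof (an_le_1 n); pose proof (bn_ge_1 n); lra.
Qed.

Lemma exists_n a b : 0 < a -> exists n, an n <= a /\ b <= bn n.
Proof.
  intros Ha. pose proof is_lim_seq_INR as HI. apply is_lim_seq_spec in HI.
  destruct (HI (Rmax b (- ln a))) as [N HN]. exists N.
  specialize (HN N (le_n N)).
  pose proof (Rmax_l b (- ln a)). pose proof (Rmax_r b (- ln a)).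
  split.
  - unfold an. rewrite <- (exp_ln a) by auto. apply exp_le_mono. lra.
  - unfold bn. lra.
Qed.

Lemma Gamma_lim s : 0 < s -> is_lim_seq (I s) (Gamma s).
Proof.
  intros Hs.
  assert (Hex : ex_finite_lim_seq (I s)).
  { apply ex_finite_lim_seq_incr with (/ s + 2 * Kc s). apply I_incr.
    intros; apply I_bound; auto. }
  pose proof (Lim_seq_correct' _ Hex) as H.
  apply ex_finite_lim_seq_correct in Hex. destruct Hex as [_ Hf].
  set (L := real (Lim_seq (I s))).
  assert (HL : is_lim_seq (I s) L) by (unfold L; exact H).
  assert (HIL : forall n, I s n <= L) by (apply is_lim_seq_incr_compare; auto; apply I_incr).
  assert (Hgen : is_RInt_gen (g s) (at_right 0) (Rbar_locally p_infty) L).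
  { intros P [eps HP]. simpl.
    apply is_lim_seq_spec in HL. destruct (HL eps) as [N HN].
    specialize (HN N (le_n N)).
    apply Filter_prod with (fun a => 0 < a <= an N) (fun b => bn N < b).
    - exists (mkposreal _ (an_pos N)). intros y Hy Hy0.
      unfold ball in Hy; simpl in Hy; unfold AbsRing_ball, abs, minus, plus, opp in Hy; simpl in Hy.
      apply Rabs_def2 in Hy. lra.
    - exists (bn N). auto.
    - intros a b [Ha HaN] HbN. simpl.
      exists (RInt (g s) a b). split.
      + apply (RInt_correct (V := R_CompleteNormedModule)). apply ex_g; pose proof (bn_ge_1 N); lra.
      + apply HP. unfold ball; simpl; unfold AbsRing_ball, abs, minus, plus, opp; simpl.
        assert (H1 : I s N <= RInt (g s) a b).
        { unfold I. apply g_mono; pose proof (an_le_1 N); pose proof (bn_ge_1 N); lra. }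
        destruct (exists_n a b Ha) as [n [Hn1 Hn2]].
        assert (H2 : RInt (g s) a b <= I s n).
        { unfold I. apply g_mono; pose proof (an_pos n); pose proof (an_le_1 N); pose proof (bn_ge_1 N); lra. }
        specialize (HIL n).
        apply Rabs_def2 in HN. apply Rabs_def1; lra. }
  replace (Gamma s) with L. exact HL.
  symmetry. unfold Gamma.
  apply (is_RInt_gen_unique (V := R_CompleteNormedModule)). exact Hgen.
Qed.

Lemma I_pos s n : 0 < I s n.
Proof.
  unfold I. apply RInt_gt_0.
  - pose proof (an_le_1 n). unfold an, bn. pose proof (pos_INR n).
    assert (exp (- (INR n + 1)) < exp 0) by (apply exp_increasing; lra).
    rewrite exp_0 in H1. lra.
  - intros; apply g_pos.
  - intros x Hx. apply g_cont. pose proof (an_pos n). lra.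
Qed.

Lemma Gamma_pos s : 0 < s -> 0 < Gamma s.
Proof.
  intros Hs. pose proof (Gamma_lim s Hs) as HL.
  assert (H : forall n, I s 0 <= I s n).
  { induction n. lra. pose proof (I_incr s n). lra. }
  assert (Hc : Rbar_le (I s 0) (Gamma s)).
  { apply (is_lim_seq_le (fun _ => I s 0) (I s)); auto. apply is_lim_seq_const. }
  simpl in Hc. pose proof (I_pos s 0). lra.
Qed.

Lemma ibp s a b : 0 < a -> a <= b ->
  RInt (g (s + 1)) a b = s * RInt (g s) a b + (g (s + 1) a - g (s + 1) b).
Proof.
  intros Ha Hab.
  assert (H1 : is_RInt (fun x => g (s + 1) x - s * g s x) a b
                 (minus ((fun x => - exp (s * ln x - x)) b) ((fun x => - exp (s * ln x - x)) a))).
  { apply (is_RInt_derive (V := R_CompleteNormedModule) (fun x => - exp (s * ln x - x))).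
    - intros x Hx. rewrite Rmin_left, Rmax_right in Hx by lra.
      auto_derive. lra.
      rewrite !g_exp by lra.
      replace ((s + 1 - 1) * ln x - x) with (s * ln x - x) by ring.
      replace ((s - 1) * ln x - x) with ((s * ln x - x) + - ln x) by ring.
      replace (s * ln x + - x) with (s * ln x - x) by ring. rewrite (exp_plus (s * ln x - x) (- ln x)), exp_Ropp, exp_ln by lra. field. lra.
    - intros x Hx. rewrite Rmin_left, Rmax_right in Hx by lra.
      apply (continuous_minus (K := R_AbsRing) (V := R_NormedModule)).
      apply g_cont; lra.
      apply (continuous_scal_r (K := R_AbsRing) (V := R_NormedModule) s (g s)).
      apply g_cont; lra. }
  assert (H2 : is_RInt (fun x => s * g s x) a b (s * RInt (g s) a b)).
  { apply (is_RInt_scal (V := R_CompleteNormedModule)).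
    apply (RInt_correct (V := R_CompleteNormedModule)). apply ex_g; lra. }
  pose proof (is_RInt_plus (V := R_CompleteNormedModule) _ _ _ _ _ _ H1 H2) as H3.
  apply (is_RInt_ext (V := R_CompleteNormedModule)) with (g := g (s + 1)) in H3.
  2: { intros x _. change plus with Rplus. lra. }
  apply (is_RInt_unique (V := R_CompleteNormedModule)) in H3. rewrite H3.
  unfold minus, plus, opp; simpl.
  rewrite !g_exp by lra.
  replace ((s + 1 - 1) * ln a - a) with (s * ln a - a) by ring.
  replace ((s + 1 - 1) * ln b - b) with (s * ln b - b) by ring.
  ring.
Qed.

Lemma lim_g_an s : 0 < s -> is_lim_seq (fun n => g (s + 1) (an n)) 0.
Proof.
  intros Hs. apply lim_0_bound with (/ s). intros n.
  pose proof (g_pos (s + 1) (an n)). split. lra.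
  rewrite g_exp by apply an_pos. unfold an at 1. rewrite ln_exp.
  pose proof (pos_INR n). pose proof (an_pos n).
  apply Rle_trans with (exp (- (s * (INR n + 1)))).
  apply exp_le_mono. nra.
  apply Rle_trans with (/ (1 + s * (INR n + 1))).
  apply exp_neg_le. nra.
  unfold Rdiv. rewrite <- Rinv_mult. apply Rinv_le_contravar. nra. nra.
Qed.

Lemma lim_g_bn s : is_lim_seq (fun n => g s (bn n)) 0.
Proof.
  apply lim_0_bound with (2 * Kc s). intros n.
  pose proof (g_pos s (bn n)). split. lra.
  pose proof (pos_INR n).
  assert (HK : 0 < Kc s) by apply exp_pos.
  apply Rle_trans with (Kc s * exp (- bn n / 2)). apply g_tail, bn_ge_1.
  apply Rle_trans with (Kc s * / (1 + bn n / 2)).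
  apply Rmult_le_compat_l. lra.
  replace (- bn n / 2) with (- (bn n / 2)) by (unfold Rdiv; ring).
  apply exp_neg_le. pose proof (bn_ge_1 n); lra.
  assert (Hb: / (1 + bn n / 2) <= 2 / (INR n + 1)).
  { unfold bn. apply Rle_trans with (/ ((INR n + 1)/2)). apply Rinv_le_contravar; lra.
    right; field; lra. }
  apply Rle_trans with (Kc s * (2 / (INR n + 1))). apply Rmult_le_compat_l; lra.
  right; unfold Rdiv; ring.
Qed.

Lemma Gamma_succ s : 0 < s -> Gamma (s + 1) = s * Gamma s.
Proof.
  intros Hs.
  pose proof (Gamma_lim (s + 1) ltac:(lra)) as H1.
  assert (H2 : is_lim_seq (fun n => s * I s n + (g (s + 1) (an n) - g (s + 1) (bn n)))
                 (s * Gamma s + (0 - 0))).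
  { apply is_lim_seq_plus'.
    apply (is_lim_seq_scal_l (I s) s (Gamma s)). apply Gamma_lim; auto.
    apply is_lim_seq_minus'. apply lim_g_an; auto. apply lim_g_bn. }
  apply is_lim_seq_ext with (v := I (s + 1)) in H2.
  2: { intros n. unfold I. rewrite ibp. reflexivity. apply an_pos.
       pose proof (an_le_1 n); pose proof (bn_ge_1 n); lra. }
  apply is_lim_seq_unique in H1. apply is_lim_seq_unique in H2.
  rewrite H1 in H2. injection H2. lra.
Qed.

Lemma g_holder x y z l al be t : 0 < t -> 0 <= l <= 1 -> y - 1 = l * (x - 1) + (1 - l) * (z - 1) ->
  g y t <= exp (l * al + (1 - l) * be) *
           (l * exp (- al) * g x t + (1 - l) * exp (- be) * g z t).
Proof.
  intros Ht Hl Hy. rewrite !g_exp by lra.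
  set (u := (x - 1) * ln t - t). set (v := (z - 1) * ln t - t).
  set (C := l * al + (1 - l) * be).
  assert (E : (y - 1) * ln t - t = l * (u + C - al) + (1 - l) * (v + C - be))
    by (unfold u, v, C; rewrite Hy; ring).
  rewrite E. eapply Rle_trans. apply exp_convex; auto.
  right.
  replace (u + C - al) with (u + (C + - al)) by ring.
  replace (v + C - be) with (v + (C + - be)) by ring.
  rewrite !exp_plus. ring.
Qed.

Lemma Gamma_logconvex x y z : 0 < x -> x <= y -> y <= z -> x < z ->
  ln (Gamma y) <= (z - y) / (z - x) * ln (Gamma x) + (y - x) / (z - x) * ln (Gamma z).
Proof.
  intros Hx Hxy Hyz Hxz.
  set (l := (z - y) / (z - x)).
  assert (Hl : 0 <= l <= 1).
  { unfold l. split. apply Rdiv_le_0_compat; lra.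
    apply Rmult_le_reg_r with (z - x). lra. unfold Rdiv. rewrite Rmult_assoc, Rinv_l; lra. }
  assert (H1l : (y - x) / (z - x) = 1 - l) by (unfold l; field; lra).
  rewrite H1l.
  assert (Hy : y - 1 = l * (x - 1) + (1 - l) * (z - 1)) by (unfold l; field; lra).
  set (al := ln (Gamma x)). set (be := ln (Gamma z)).
  pose proof (Gamma_pos x Hx) as Gx. pose proof (Gamma_pos z ltac:(lra)) as Gz.
  pose proof (Gamma_pos y ltac:(lra)) as Gy.
  set (C := exp (l * al + (1 - l) * be)).
  assert (HI : forall n, I y n <= C * (l * exp (- al) * I x n + (1 - l) * exp (- be) * I z n)).
  { intros n. unfold I.
    assert (Ha := an_pos n). assert (Hab : an n <= bn n)
      by (pose proof (an_le_1 n); pose proof (bn_ge_1 n); lra).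
    assert (HR : is_RInt (fun t => C * (l * exp (- al) * g x t + (1 - l) * exp (- be) * g z t))
                   (an n) (bn n)
                   (C * (l * exp (- al) * RInt (g x) (an n) (bn n) + (1 - l) * exp (- be) * RInt (g z) (an n) (bn n)))).
    { apply (is_RInt_scal (V := R_CompleteNormedModule)).
      apply (is_RInt_plus (V := R_CompleteNormedModule)).
      apply (is_RInt_scal (V := R_CompleteNormedModule)).
      apply (RInt_correct (V := R_CompleteNormedModule)). apply ex_g; lra.
      apply (is_RInt_scal (V := R_CompleteNormedModule)).
      apply (RInt_correct (V := R_CompleteNormedModule)). apply ex_g; lra. }
    rewrite <- (is_RInt_unique (V := R_CompleteNormedModule) _ _ _ _ HR).
    apply RInt_le; auto. apply ex_g; lra. eexists; exact HR.
    intros t Ht. apply g_holder; auto. lra. }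
  assert (Hlim : is_lim_seq (fun n => C * (l * exp (- al) * I x n + (1 - l) * exp (- be) * I z n))
                   (C * (l * exp (- al) * Gamma x + (1 - l) * exp (- be) * Gamma z))).
  { apply (is_lim_seq_scal_l _ C (Finite _)).
    apply is_lim_seq_plus'.
    apply (is_lim_seq_scal_l _ _ (Finite _)). apply Gamma_lim; auto.
    apply (is_lim_seq_scal_l _ _ (Finite _)). apply Gamma_lim; lra. }
  pose proof (is_lim_seq_le _ _ _ _ HI (Gamma_lim y ltac:(lra)) Hlim) as Hle. simpl in Hle.
  unfold al, be in Hle. rewrite !exp_Ropp, !exp_ln in Hle by auto.
  replace (l * / Gamma x * Gamma x) with l in Hle by (field; lra).
  replace ((1 - l) * / Gamma z * Gamma z) with (1 - l) in Hle by (field; lra).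
  apply Rle_trans with (ln C). apply ln_le; auto.
  lra. unfold C. rewrite ln_exp. lra.
Qed.

Definition lg s := ln (Gamma s).

Lemma lg_succ s : 0 < s -> lg (s + 1) = ln s + lg s.
Proof. intros Hs. unfold lg. rewrite Gamma_succ by auto. apply ln_mult; auto. apply Gamma_pos; auto. Qed.

Lemma lg_shift s N : 0 < s ->
  lg (s + INR (S N)) = lg s + sum_f_R0 (fun k => ln (s + INR k)) N.
Proof.
  intros Hs. induction N.
  - simpl. rewrite lg_succ by auto. rewrite Rplus_0_r. ring.
  - rewrite S_INR. replace (s + (INR (S N) + 1)) with ((s + INR (S N)) + 1) by ring.
    rewrite lg_succ by (pose proof (pos_INR (S N)); lra).
    rewrite IHN. change (sum_f_R0 (fun k => ln (s + INR k)) (S N)) with (sum_f_R0 (fun k => ln (s + INR k)) N + ln (s + INR (S N))). ring.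
Qed.

Lemma sum_ln_diff x h N : 0 < x -> 0 < h ->
  sum_f_R0 (fun k => ln (x + h + INR k)) N - sum_f_R0 (fun k => ln (x + INR k)) N
  <= h * sum_f_R0 (fun k => / (x + INR k)) N.
Proof.
  intros Hx Hh. induction N.
  - simpl. rewrite !Rplus_0_r.
    assert (H := ln_le_sub1 ((x + h) / x) ltac:(apply Rdiv_lt_0_compat; lra)).
    rewrite ln_div in H by lra.
    assert ((x + h) / x - 1 = h * / x) by (field; lra). lra.
  - rewrite !tech5. cbv beta. pose proof (pos_INR (S N)).
    assert (H1 := ln_le_sub1 ((x + h + INR (S N)) / (x + INR (S N)))
                   ltac:(apply Rdiv_lt_0_compat; lra)).
    rewrite ln_div in H1 by lra.
    assert ((x + h + INR (S N)) / (x + INR (S N)) - 1 = h * / (x + INR (S N))) by (field; lra).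
    lra.
Qed.

Lemma D_lower x h N : 1 < x -> 0 < h ->
  ln (x + INR N) - sum_f_R0 (fun k => / (x + INR k)) N <= (lg (x + h) - lg x) / h.
Proof.
  intros Hx Hh. pose proof (pos_INR N) as HN.
  pose proof (lg_shift x N ltac:(lra)) as S1.
  pose proof (lg_shift (x + h) N ltac:(lra)) as S2.
  pose proof (sum_ln_diff x h N ltac:(lra) Hh) as Hs.
  set (X := x + INR N).
  assert (Hc := Gamma_logconvex X (X + 1) (X + 1 + h) ltac:(unfold X; lra) ltac:(lra) ltac:(lra) ltac:(lra)).
  fold (lg X) (lg (X + 1)) (lg (X + 1 + h)) in Hc.
  assert (HX := lg_succ X ltac:(unfold X; lra)).
  replace (X + 1 + h - (X + 1)) with h in Hc by ring.
  replace (X + 1 + h - X) with (1 + h) in Hc by ring.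
  replace (X + 1 - X) with 1 in Hc by ring.
  assert (E1 : X + 1 = x + INR (S N)) by (unfold X; rewrite S_INR; ring).
  assert (E2 : X + 1 + h = x + h + INR (S N)) by (unfold X; rewrite S_INR; ring).
  rewrite E2, E1 in Hc. rewrite E1 in HX.
  set (L1 := lg (x + INR (S N))) in *. set (L2 := lg (x + h + INR (S N))) in *.
  assert (Hc2 : L1 + h * ln X <= L2).
  { assert (lg X = L1 - ln X) by lra. rewrite H in Hc.
    apply Rmult_le_compat_l with (r := 1 + h) in Hc; [|lra].
    replace ((1 + h) * (h / (1 + h) * (L1 - ln X) + 1 / (1 + h) * L2))
      with (h * (L1 - ln X) + L2) in Hc by (field; lra).
    lra. }
  apply Rmult_le_reg_r with h. auto.
  unfold Rdiv. rewrite Rmult_assoc, Rinv_l, Rmult_1_r by lra.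
  lra.
Qed.

Lemma D_upper x h : 0 < x -> 0 < h <= 1 -> (lg (x + h) - lg x) / h <= ln x.
Proof.
  intros Hx Hh.
  assert (Hc := Gamma_logconvex x (x + h) (x + 1) Hx ltac:(lra) ltac:(lra) ltac:(lra)).
  fold (lg x) (lg (x + h)) (lg (x + 1)) in Hc.
  rewrite lg_succ in Hc by auto.
  replace ((x + 1 - (x + h)) / (x + 1 - x)) with (1 - h) in Hc by (field; lra).
  replace ((x + h - x) / (x + 1 - x)) with h in Hc by (field; lra).
  apply Rmult_le_reg_r with h. lra.
  unfold Rdiv. rewrite Rmult_assoc, Rinv_l, Rmult_1_r by lra. lra.
Qed.

Lemma digamma_eq x : digamma x =
  real (Lim_seq (fun n => (lg (x + / (INR n + 1)) - lg x) / / (INR n + 1))).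
Proof.
  unfold digamma, Derive, Lim. f_equal. apply Lim_seq_ext. intros n.
  simpl. rewrite Rplus_0_l. reflexivity.
Qed.

Lemma hn_pos n : 0 < / (INR n + 1) <= 1.
Proof.
  pose proof (pos_INR n). split. apply Rinv_0_lt_compat; lra.
  rewrite <- Rinv_1. apply Rinv_le_contravar; lra.
Qed.

Lemma digamma_lower x N : 1 < x ->
  ln (x + INR N) - sum_f_R0 (fun k => / (x + INR k)) N <= digamma x.
Proof.
  intros Hx. rewrite digamma_eq.
  apply (real_Lim_bounds _ _ (ln x)). intros n.
  pose proof (hn_pos n). split.
  apply D_lower; lra. apply D_upper; lra.
Qed.

Lemma harm_cmp x N : 1 <= x ->
  sum_f_R0 (fun k => / (x + INR k)) N <= sum_f_R0 (fun k => / INR (S k)) N - (1 - / x).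
Proof.
  intros Hx. induction N.
  - simpl. rewrite Rplus_0_r, Rinv_1. lra.
  - rewrite !tech5. cbv beta. pose proof (pos_INR (S N)).
    assert (/ (x + INR (S N)) <= / INR (S (S N))).
    { apply Rinv_le_contravar. rewrite S_INR; lra. rewrite (S_INR (S N)); lra. }
    lra.
Qed.

Definition Eseq (n : nat) := sum_f_R0 (fun k => / INR (S k)) n - ln (INR (S n)).

Lemma Eseq_le_1 n : Eseq n <= 1.
Proof.
  unfold Eseq. induction n.
  - simpl. rewrite ln_1. lra.
  - rewrite tech5. cbv beta.
    pose proof (pos_INR n).
    assert (H1 := ln_le_sub1 (INR (S n) / INR (S (S n)))
                   ltac:(apply Rdiv_lt_0_compat; rewrite ?S_INR; lra)).
    rewrite ln_div in H1 by (rewrite ?S_INR; lra).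
    assert (INR (S n) / INR (S (S n)) - 1 = - / INR (S (S n))).
    { rewrite !S_INR. field. lra. }
    lra.
Qed.

Lemma gamma_part x : 1 < x -> euler_gamma + digamma x >= 1 - / x.
Proof.
  intros Hx. unfold euler_gamma.
  fold Eseq.
  assert (H : forall n, 1 - / x - digamma x <= Eseq n <= 1).
  { intros n. split; [|apply Eseq_le_1].
    pose proof (digamma_lower x n Hx).
    pose proof (harm_cmp x n ltac:(lra)).
    assert (ln (INR (S n)) <= ln (x + INR n)).
    { apply ln_le. rewrite S_INR; pose proof (pos_INR n); lra. rewrite S_INR; lra. }
    unfold Eseq. lra. }
  apply real_Lim_bounds in H. lra.
Qed.

Section Q.
Variable q : R.
Hypothesis Hq : 0 < q < 1.

Lemma lnq_neg : ln q < 0.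
Proof. rewrite <- ln_1. apply ln_increasing; lra. Qed.

Lemma Rp_pos a : 0 < Rpower q a. Proof. apply exp_pos. Qed.

Lemma Rp_lt1 a : 0 < a -> Rpower q a < 1.
Proof. intros Ha. unfold Rpower. rewrite <- exp_0. apply exp_increasing.
  pose proof lnq_neg. nra. Qed.

Lemma Rp_decr a b : a <= b -> Rpower q b <= Rpower q a.
Proof. intros H. unfold Rpower. apply exp_le_mono. pose proof lnq_neg. nra. Qed.

Lemma qpow_pos n : 0 < q ^ n. Proof. apply pow_lt; lra. Qed.
Lemma qpow_le1 n : q ^ n <= 1. Proof. apply pow_le1 || (apply Rle_trans with (1 ^ n); [apply pow_incr; lra | rewrite pow1; lra]). Qed.

Definition fq s n := (1 - q ^ n) / (1 - Rpower q (s + INR n)).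

Lemma qp_S s M : qGamma_partial q s (S M) = qGamma_partial q s M * fq s (S M).
Proof. reflexivity. Qed.

Lemma fq_bounds s n : 0 < s -> (1 <= n)%nat -> 1 - q ^ n <= fq s n <= 1.
Proof.
  intros Hs Hn. unfold fq.
  assert (Hp : 0 < s + INR n) by (pose proof (pos_INR n); lra).
  pose proof (Rp_lt1 _ Hp). pose proof (Rp_pos (s + INR n)).
  assert (Hqn : q ^ n < 1).
  { destruct n. lia. simpl. pose proof (qpow_le1 n). pose proof (qpow_pos n). nra. }
  assert (HR : Rpower q (s + INR n) <= q ^ n).
  { rewrite <- Rpower_pow by lra. apply Rp_decr. lra. }
  split.
  - apply Rmult_le_reg_r with (1 - Rpower q (s + INR n)). lra.
    unfold Rdiv. rewrite Rmult_assoc, Rinv_l, Rmult_1_r by lra.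
    pose proof (qpow_pos n). nra.
  - apply Rmult_le_reg_r with (1 - Rpower q (s + INR n)). lra.
    unfold Rdiv. rewrite Rmult_assoc, Rinv_l, Rmult_1_r by lra. lra.
Qed.

Lemma exp_le_1my y : 0 <= y <= q -> exp (- (y / (1 - q))) <= 1 - y.
Proof.
  intros Hy. eapply Rle_trans. apply exp_neg_le. apply Rdiv_le_0_compat; lra.
  apply Rmult_le_reg_r with (1 + y / (1 - q)). 
  assert (0 <= y / (1 - q)) by (apply Rdiv_le_0_compat; lra). lra.
  rewrite Rinv_l by (assert (0 <= y / (1 - q)) by (apply Rdiv_le_0_compat; lra); lra).
  replace ((1 - y) * (1 + y / (1 - q))) with (1 + y * (q - y) / (1 - q)) by (field; lra).
  assert (0 <= y * (q - y) / (1 - q)) by (apply Rdiv_le_0_compat; nra). lra.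
Qed.

Lemma qp_lower s N : 0 < s ->
  exp (- ((q - q ^ (S N)) / ((1 - q) * (1 - q)))) <= qGamma_partial q s N.
Proof.
  intros Hs. induction N.
  - simpl. replace (q - q * 1) with 0 by ring. unfold Rdiv. rewrite Rmult_0_l, Ropp_0, exp_0. lra.
  - rewrite qp_S.
    destruct (fq_bounds s (S N) Hs ltac:(lia)) as [F1 F2].
    assert (H1 : exp (- (q ^ S N / (1 - q))) <= 1 - q ^ S N).
    { apply exp_le_1my. split. pose proof (qpow_pos (S N)); lra.
      simpl. pose proof (qpow_le1 N). nra. }
    assert (E : - ((q - q ^ S (S N)) / ((1 - q) * (1 - q))) =
                - ((q - q ^ S N) / ((1 - q) * (1 - q))) + - (q ^ S N / (1 - q))).
    { simpl. field. lra. }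
    rewrite E, exp_plus.
    apply Rmult_le_compat; try (apply Rlt_le, exp_pos); auto. lra.
Qed.

Definition m0 := exp (- (q / ((1 - q) * (1 - q)))).

Lemma qp_lower0 s N : 0 < s -> m0 <= qGamma_partial q s N.
Proof.
  intros Hs. eapply Rle_trans; [|apply qp_lower; auto]. unfold m0.
  apply exp_le_mono. apply Ropp_le_contravar. unfold Rdiv.
  apply Rmult_le_compat_r. apply Rlt_le, Rinv_0_lt_compat. nra.
  pose proof (qpow_pos (S N)). lra.
Qed.

Lemma qp_decr s N : 0 < s -> qGamma_partial q s (S N) <= qGamma_partial q s N.
Proof.
  intros Hs. rewrite qp_S. destruct (fq_bounds s (S N) Hs ltac:(lia)).
  pose proof (qp_lower0 s N Hs). assert (0 < m0) by apply exp_pos.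
  nra.
Qed.

Definition P s := real (Lim_seq (qGamma_partial q s)).

Lemma P_lim s : 0 < s -> is_lim_seq (qGamma_partial q s) (P s).
Proof.
  intros Hs.
  assert (Hex : ex_finite_lim_seq (qGamma_partial q s)).
  { apply ex_finite_lim_seq_decr with m0. intros; apply qp_decr; auto.
    intros; apply qp_lower0; auto. }
  exact (Lim_seq_correct' _ Hex).
Qed.

Lemma P_pos s : 0 < s -> 0 < P s.
Proof.
  intros Hs.
  assert (H : Rbar_le m0 (P s)).
  { apply (is_lim_seq_le (fun _ => m0) (qGamma_partial q s)).
    intros; apply qp_lower0; auto. apply is_lim_seq_const. apply P_lim; auto. }
  simpl in H. assert (0 < m0) by apply exp_pos. lra.
Qed.


Lemma fq_mono x h n : 0 < x -> 0 < h -> (1 <= n)%nat -> fq (x + h) n <= fq x n.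
Proof.
  intros Hx Hh Hn. unfold fq.
  assert (Hp : 0 < x + INR n) by (pose proof (pos_INR n); lra).
  pose proof (Rp_lt1 _ Hp).
  pose proof (Rp_decr (x + INR n) (x + h + INR n) ltac:(lra)).
  pose proof (Rp_pos (x + h + INR n)).
  assert (0 <= 1 - q ^ n) by (pose proof (qpow_le1 n); lra).
  unfold Rdiv. apply Rmult_le_compat_l; auto.
  apply Rinv_le_contravar; lra.
Qed.

Definition rho x h := (1 - Rpower q (x + 1)) / (1 - Rpower q (x + h + 1)).

Lemma ratio_partial x h N : 0 < x -> 0 < h ->
  qGamma_partial q (x + h) (S N) <= rho x h * qGamma_partial q x (S N).
Proof.
  intros Hx Hh. induction N.
  - rewrite !qp_S. simpl qGamma_partial. unfold fq, rho.
    change (INR 1) with 1.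
    pose proof (Rp_lt1 (x + 1) ltac:(lra)). pose proof (Rp_lt1 (x + h + 1) ltac:(lra)).
    right. field. lra.
  - rewrite (qp_S (x + h) (S N)), (qp_S x (S N)).
    destruct (fq_bounds (x + h) (S (S N)) ltac:(lra) ltac:(lia)).
    pose proof (fq_mono x h (S (S N)) Hx Hh ltac:(lia)).
    pose proof (qp_lower0 (x + h) (S N) ltac:(lra)).
    pose proof (qp_lower0 x (S N) ltac:(lra)).
    assert (0 < m0) by apply exp_pos.
    assert (0 < 1 - q ^ S (S N)).
    { simpl. pose proof (qpow_le1 N). pose proof (qpow_pos N). nra. }
    assert (0 <= rho x h).
    { unfold rho. pose proof (Rp_lt1 (x + 1) ltac:(lra)). pose proof (Rp_lt1 (x + h + 1) ltac:(lra)).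
      apply Rdiv_le_0_compat; lra. }
    apply Rle_trans with (rho x h * qGamma_partial q x (S N) * fq (x + h) (S (S N))).
    apply Rmult_le_compat_r; lra.
    rewrite Rmult_assoc. apply Rmult_le_compat_l; auto.
    apply Rmult_le_compat_l; lra.
Qed.

Lemma P_ratio x h : 0 < x -> 0 < h -> P (x + h) <= rho x h * P x.
Proof.
  intros Hx Hh.
  assert (H : Rbar_le (Lim_seq (qGamma_partial q (x + h)))
                      (Lim_seq (fun n => rho x h * qGamma_partial q x n))).
  { apply Lim_seq_le_loc. exists 1%nat. intros n Hn.
    destruct n. lia. apply ratio_partial; auto. }
  rewrite (is_lim_seq_unique _ _ (P_lim (x + h) ltac:(lra))) in H.
  rewrite (is_lim_seq_unique _ _ (is_lim_seq_scal_l _ (rho x h) _ (P_lim x Hx))) in H.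
  simpl in H. exact H.
Qed.

Lemma ln_qGamma s : 0 < s -> ln (qGamma q s) = (1 - s) * ln (1 - q) + ln (P s).
Proof.
  intros Hs. unfold qGamma. fold (P s).
  rewrite ln_mult. rewrite ln_Rpower. reflexivity.
  apply exp_pos. apply P_pos; auto.
Qed.

Lemma ln_rho x h : 0 < x -> 0 < h <= 1 ->
  ln (rho x h) <= - (Rpower q (x + 1) * (- ln q / (1 - ln q))) * h.
Proof.
  intros Hx Hh.
  pose proof (Rp_lt1 (x + 1) ltac:(lra)). pose proof (Rp_lt1 (x + h + 1) ltac:(lra)).
  pose proof (Rp_pos (x + 1)). pose proof (Rp_pos (x + h + 1)).
  assert (Hr : 0 < rho x h) by (unfold rho; apply Rdiv_lt_0_compat; lra).
  eapply Rle_trans. apply ln_le_sub1; auto.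
  assert (E : Rpower q (x + h + 1) = Rpower q (x + 1) * Rpower q h).
  { rewrite <- Rpower_plus. f_equal. ring. }
  set (L := - ln q). assert (HL : 0 < L) by (unfold L; pose proof lnq_neg; lra).
  assert (Hqh : 1 - Rpower q h >= L * h / (1 + L)).
  { unfold Rpower. replace (h * ln q) with (- (L * h)) by (unfold L; ring).
    pose proof (exp_neg_le (L * h) ltac:(nra)).
    assert (/ (1 + L * h) <= 1 - L * h / (1 + L)).
    { apply Rmult_le_reg_r with (1 + L * h). nra.
      rewrite Rinv_l by nra.
      replace ((1 - L * h / (1 + L)) * (1 + L * h)) with (1 + L * L * (h * (1 - h)) / (1 + L)) by (field; lra).
      assert (0 <= L * L * (h * (1 - h)) / (1 + L)).
      { apply Rdiv_le_0_compat. apply Rmult_le_pos; nra. lra. }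
      lra. }
    lra. }
  unfold rho. rewrite E.
  set (A := Rpower q (x + 1)) in *. set (B := Rpower q h) in *.
  assert (HB : 0 < 1 - A * B) by (rewrite <- E; lra).
  replace ((1 - A) / (1 - A * B) - 1) with (- (A * (1 - B)) / (1 - A * B)) by (field; lra).
  assert (HAB : 0 <= A * (1 - B)).
  { apply Rmult_le_pos. lra. assert (0 <= L * h / (1 + L)) by (apply Rdiv_le_0_compat; nra). lra. }
  apply Rle_trans with (- (A * (1 - B))).
  { unfold Rdiv. rewrite Ropp_mult_distr_l_reverse.
    apply Ropp_le_contravar.
    pose proof (Rinv_le_contravar (1 - A * B) 1 HB ltac:(rewrite <- E; nra)) as Hi.
    rewrite Rinv_1 in Hi.
    assert (1 <= / (1 - A * B)) by (rewrite <- Rinv_1; apply Rinv_le_contravar; [lra | rewrite <- E; lra]).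
    nra. }
  assert (A * (1 - B) >= A * (L * h / (1 + L))) by (apply Rle_ge, Rmult_le_compat_l; lra).
  replace (- (A * (L / (1 - ln q))) * h) with (- (A * (L * h / (1 + L)))).

  lra. unfold L. field. pose proof lnq_neg. lra.
Qed.

End Q.

Lemma q_part q x : 0 < q < 1 -> 0 < x -> qdigamma q x < - ln (1 - q).
Proof.
  intros Hq Hx.
  assert (Hc : 0 < - ln (1 - q)).
  { assert (ln (1 - q) < 0) by (rewrite <- ln_1; apply ln_increasing; lra). lra. }
  set (d := Rpower q (x + 1) * (- ln q / (1 - ln q))).
  assert (Hd : 0 < d).
  { unfold d. apply Rmult_lt_0_compat. apply exp_pos.
    pose proof (lnq_neg q Hq). apply Rdiv_lt_0_compat; lra. }
  unfold qdigamma, Derive, Lim.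
  apply (real_Lim_upper_strict _ _ (- ln (1 - q) - d) Hc ltac:(lra)).
  intros n. simpl. rewrite Rplus_0_l.
  destruct (hn_pos n) as [H1 H2]. set (h := / (INR n + 1)) in *.
  rewrite !ln_qGamma by (auto; lra).
  pose proof (P_ratio q Hq x h Hx H1) as Hr.
  pose proof (ln_rho q Hq x h Hx (conj H1 H2)) as Hl. fold d in Hl.
  pose proof (P_pos q Hq x Hx). pose proof (P_pos q Hq (x + h) ltac:(lra)).
  assert (Hrho : 0 < rho q x h).
  { unfold rho. pose proof (Rp_lt1 q Hq (x + 1) ltac:(lra)).
    pose proof (Rp_lt1 q Hq (x + h + 1) ltac:(lra)). apply Rdiv_lt_0_compat; lra. }
  assert (Hln : ln (P q (x + h)) <= ln (rho q x h) + ln (P q x)).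
  { rewrite <- ln_mult by auto. apply ln_le; auto. }
  apply Rmult_le_reg_r with h. auto.
  unfold Rdiv. rewrite Rmult_assoc, Rinv_l, Rmult_1_r by lra.
  nra.
Qed.

Theorem lemma3p4 (a b q alpha beta t : R) :
  0 < a -> 0 < b -> 0 < q < 1 -> alpha + beta * t > 1 ->
  a * euler_gamma - b * ln (1 - q) + a * digamma (alpha + beta * t)
    - b * qdigamma q (alpha + beta * t) > 0.
Proof.
  intros Ha Hb Hq Hx.
  set (x := alpha + beta * t) in *.
  pose proof (gamma_part x Hx) as G.
  pose proof (q_part q x Hq ltac:(lra)) as Q.
  assert (0 < 1 - / x).
  { assert (/ x < 1). rewrite <- Rinv_1. apply Rinv_lt_contravar; lra. lra. }
  assert (a * (euler_gamma + digamma x) >= a * (1 - / x)) by (apply Rle_ge, Rmult_le_compat_l; lra).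
  assert (b * (- ln (1 - q) - qdigamma q x) > 0) by (apply Rmult_lt_0_compat; lra).
  nra.
Qed.
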